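(* For every $A\in\mathcal{M}_n$ there exist $B\in\mathcal{M}_n$ such that none of $\alpha^B_1,\dots,\alpha^B_n$ is of even exceptional type, and a graded ring isomorphism $\psi\colon H^*(M(A);\mathbb{Z})\to H^*(M(B);\mathbb{Z})$ with $\psi(p(M(A)))=p(M(B))$, where $p$ denotes the total Pontrjagin class.
   Context: Let $\mathcal{M}_n$ be the set of integral strictly upper triangular $n\times n$ matrices $A=(A^i_j)$ ($A^i_j$ is the $(i,j)$ entry, and $A^i_j=0$ for $i\ge j$). For $A\in\mathcal{M}_n$, $M(A)$ denotes the Bott manifold obtained as the quotient of $(S^3)^n$ ($S^3\subset\mathbb{C}^2$ the unit sphere) by the free $(S^1)^n$-action $(g_1,\dots,g_n)\cdot((z_1,w_1),\dots,(z_n,w_n))=\big(((\prod_{k<j}g_k^{-A^k_j})g_jz_j,\ g_jw_j)\big)_{j=1}^n$. Let $x^A_j\in H^2(M(A);\mathbb{Z})$ be the first Chern class of the line bundle obtained as the quotient of $(S^3)^n\times\mathbb{C}$ where $g$ acts on the $\mathbb{C}$-factor by $g_j^{-1}$. Put $\alpha^A_j=\sum_{i<j}A^i_jx^A_i$. Then $H^*(M(A);\mathbb{Z})=\mathbb{Z}[x^A_1,\dots,x^A_n]/((x^A_j)^2-\alpha^A_jx^A_j\mid j=1,\dots,n)$. Define $y^A_j=x^A_j-\tfrac12\alpha^A_j\in H^2(M(A);\mathbb{Q})$. The same notation is used for $B$. We say $\alpha^B_j$ is of exceptional type if $\alpha^B_j=cy^B_i$ for some nonzero integer $c$ and some $i<j$,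 and of even exceptional type if moreover this integer $c$ is even. *)

(* Defs.v *)
From HB Require Import structures.
From mathcomp Require Import all_boot all_order all_algebra.
From mathcomp Require Import mpoly.
Set Implicit Arguments. Unset Strict Implicit. Unset Printing Implicit Defensive.
Import Order.TTheory GRing.Theory Num.Theory.
Local Open Scope ring_scope.

(* Indices are 0-based: 'I_n = {0,...,n-1} stands for {1,...,n}. *)

(* M_n : integral strictly upper triangular n x n matrices; A i j = A^i_j. *)
Definition strictly_upper (n : nat) (A : 'M[int]_n) : Prop :=
  forall i j : 'I_n, (j <= i)%N -> A i j = 0.

(* H^*(M(A);Z) is modelled as Z[x_1..x_n] / I_A, with x_j in cohomological
   degree 2 (polynomial degree 1).  alpha^A_j = sum_{i<j} A^i_j x_i. *)
Definition alpha (n : nat) (A : 'M[int]_n) (j : 'I_n) : {mpoly int[n]} :=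
  \sum_(i < n) (A i j)%:MP_[n] * 'X_i.

Definition inI (n : nat) (A : 'M[int]_n) (p : {mpoly int[n]}) : Prop :=
  exists c : 'I_n -> {mpoly int[n]},
    p = \sum_(j < n) c j * ('X_j ^+ 2 - alpha A j * 'X_j).

Definition pontrjagin (n : nat) (A : 'M[int]_n) : {mpoly int[n]} :=
  \prod_(j < n) (1 + alpha A j ^+ 2).

(* Rational versions in H^2(M(A);Q) (linear forms; the ideal has no
   degree-1 part, so H^2(M(A);Q) is identified with linear forms). *)
Definition alphaQ (n : nat) (A : 'M[int]_n) (j : 'I_n) : {mpoly rat[n]} :=
  \sum_(i < n) ((A i j)%:~R : rat) *: 'X_i.

Definition yQ (n : nat) (A : 'M[int]_n) (j : 'I_n) : {mpoly rat[n]} :=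
  'X_j - (2%:R^-1 : rat) *: alphaQ A j.

Definition even_exceptional (n : nat) (B : 'M[int]_n) (j : 'I_n) : Prop :=
  exists (i : 'I_n) (c : int),
    (i < j)%N /\ c != 0 /\ (2 %| c)%Z /\
    alphaQ B j = (c%:~R : rat) *: yQ B i.

(* A graded ring isomorphism H^*(M(A)) -> H^*(M(B)), presented by a
   degree-preserving ring morphism of polynomial rings inducing a
   bijection Z[x]/I_A -> Z[x]/I_B. *)
Definition graded_iso_induced (n : nat) (A B : 'M[int]_n)
    (phi : {rmorphism {mpoly int[n]} -> {mpoly int[n]}}) : Prop :=
  [/\ forall (d : nat) (p : {mpoly int[n]}),
        p \is d.-homog -> phi p \is d.-homog,
      forall p, inI A p -> inI B (phi p),
      forall p, inI B (phi p) -> inI A p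
    & forall q, exists p, inI B (phi p - q)].

(* Main.v *)
Require Import Defs.
From HB Require Import structures.
From mathcomp Require Import all_boot all_order all_algebra.
From mathcomp Require Import mpoly.
From mathcomp Require Import ring.
From Stdlib Require Import Classical_Prop.
Import Order.TTheory GRing.Theory Num.Theory.
Set Implicit Arguments. Unset Strict Implicit. Unset Printing Implicit Defensive.
Local Open Scope ring_scope.


Section Ideal.
Variables (n : nat) (A : 'M[int]_n).
Definition gen (j : 'I_n) : {mpoly int[n]} := 'X_j ^+ 2 - alpha A j * 'X_j.

Lemma inI0 : inI A 0.
Proof. exists (fun _ => 0); by rewrite big1 // => j _; rewrite mul0r. Qed.

Lemma inID p q : inI A p -> inI A q -> inI A (p + q).
Proof.
move=> [c1 ->] [c2 ->]; exists (fun j => c1 j + c2 j).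
by rewrite -big_split /=; apply: eq_bigr => j _; rewrite mulrDl.
Qed.

Lemma inIMl q p : inI A p -> inI A (q * p).
Proof.
move=> [c ->]; exists (fun j => q * c j).
by rewrite mulr_sumr; apply: eq_bigr => j _; rewrite mulrA.
Qed.

Lemma inIN p : inI A p -> inI A (- p).
Proof. by move=> h; rewrite -mulN1r; apply: inIMl. Qed.

Lemma inIB p q : inI A p -> inI A q -> inI A (p - q).
Proof. by move=> hp hq; apply: inID => //; apply: inIN. Qed.

Lemma inIgen j : inI A (gen j).
Proof.
exists (fun k => (k == j)%:R); rewrite (bigD1 j) //= eqxx mul1r big1 ?addr0 //.
by move=> k /negbTE ->; rewrite mul0r.
Qed.

Lemma inI_sum (I : Type) (r : seq I) (P : pred I) (F : I -> {mpoly int[n]}) :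
  (forall i, P i -> inI A (F i)) -> inI A (\sum_(i <- r | P i) F i).
Proof. by move=> h; apply: (big_ind (inI A)) => //; [exact: inI0 | exact: inID]. Qed.

Lemma inI_prod (I : Type) (r : seq I) (P : pred I) (F G : I -> {mpoly int[n]}) :
  (forall i, P i -> inI A (F i - G i)) ->
  inI A (\prod_(i <- r | P i) F i - \prod_(i <- r | P i) G i).
Proof.
move=> h; apply: (big_ind2 (fun x y => inI A (x - y))).
- by rewrite subrr; exact: inI0.
- move=> x1 x2 y1 y2 hx hy.
  have -> : x1 * y1 - x2 * y2 = y1 * (x1 - x2) + x2 * (y1 - y2) by ring.
  by apply: inID; apply: inIMl.
- exact: h.
Qed.
End Ideal.

Lemma inI_morph n (A B : 'M[int]_n) (f : {rmorphism {mpoly int[n]} -> {mpoly int[n]}}) :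
  (forall j, inI B (f (gen A j))) -> forall p, inI A p -> inI B (f p).
Proof.
move=> h p [c ->]; rewrite rmorph_sum; apply: inI_sum => j _.
by rewrite rmorphM; apply: inIMl; exact: h.
Qed.

Definition Equiv n (A B : 'M[int]_n) : Prop :=
  exists phi : {rmorphism {mpoly int[n]} -> {mpoly int[n]}},
      graded_iso_induced A B phi /\
      inI B (phi (pontrjagin A) - pontrjagin B).

Lemma Equiv_refl n (A : 'M[int]_n) : Equiv A A.
Proof.
exists idfun; split; last by rewrite /= subrr; exact: inI0.
split => //= q; exists q; rewrite subrr; exact: inI0.
Qed.

Lemma Equiv_trans n (A B C : 'M[int]_n) : Equiv A B -> Equiv B C -> Equiv A C.
Proof.
move=> [f [[f1 f2 f3 f4] fp]] [g [[g1 g2 g3 g4] gp]].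
exists (g \o f); split.
  split => /=.
  - by move=> d p hp; apply: g1; apply: f1.
  - by move=> p hp; apply: g2; apply: f2.
  - by move=> p hp; apply: f3; apply: g3.
  - move=> q; have [p2 h2] := g4 q; have [p1 h1] := f4 p2.
    exists p1; have -> : g (f p1) - q = g (f p1 - p2) + (g p2 - q).
      by rewrite rmorphB /=; ring.
    by apply: inID => //; apply: g2.
have -> : (g \o f) (pontrjagin A) - pontrjagin C =
   g (f (pontrjagin A) - pontrjagin B) + (g (pontrjagin B) - pontrjagin C).
  by rewrite /= rmorphB /=; ring.
by apply: inID => //; apply: g2.
Qed.


Definition sig n (t i : 'I_n) (a : int) : n.-tuple {mpoly int[n]} :=
  [tuple if j == t then 'X_t + a%:MP * 'X_i else 'X_j | j < n].

Lemma sigX n (t i : 'I_n) a j :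
  comp_mpoly (sig t i a) 'X_j = if j == t then 'X_t + a%:MP * 'X_i else 'X_j.
Proof. by rewrite comp_mpolyXU -tnth_nth tnth_mktuple. Qed.

Lemma sig_alpha n (A : 'M[int]_n) (t i : 'I_n) a j :
  comp_mpoly (sig t i a) (alpha A j) = alpha A j + (A t j * a)%:MP * 'X_i.
Proof.
rewrite /alpha rmorph_sum /= (bigD1 t) //= [X in _ = X + _](bigD1 t) //=.
rewrite rmorphM /= comp_mpolyC sigX eqxx.
rewrite (eq_bigr (fun r => (A r j)%:MP * 'X_r)); last first.
  by move=> r /negbTE hr; rewrite rmorphM /= comp_mpolyC sigX hr.
rewrite mpolyCM; ring.
Qed.

Lemma comp_homog n (lq : n.-tuple {mpoly int[n]}) :
  (forall i, tnth lq i \is 1.-homog) ->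
  forall d p, p \is d.-homog -> comp_mpoly lq p \is d.-homog.
Proof.
move=> hq d p hp; rewrite comp_mpolyE big_seq; apply: rpred_sum => m hm.
apply: dhomogZ.
have -> : d = (\sum_(i < n) m i)%N.
  by rewrite -mdegE; have := dhomog_mf hp hm.
idtac.
apply: (big_ind2 (fun (x : {mpoly int[n]}) (e : nat) => x \is e.-homog)) => //.
- exact: dhomog1.
- by move=> x1 e1 x2 e2 h1 h2; apply: dhomogM.
- move=> i _; have := dhomogMn (m i) (hq i); by rewrite mul1n.
Qed.

Lemma comp_inv (R : comRingType) n (lp lq : n.-tuple {mpoly R[n]}) :
  (forall i, comp_mpoly lq (tnth lp i) = 'X_i) ->
  forall p, comp_mpoly lq (comp_mpoly lp p) = p.
Proof.
move=> h; elim/mpolyind => [|c m p _ _ ih]; first by rewrite !comp_mpoly0.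
rewrite !comp_mpolyD !comp_mpolyZ ih comp_mpolyX rmorph_prod /=.
rewrite [in RHS]mpolyXE_id; congr (_ *: _ + _); apply: eq_bigr => i _.
by rewrite rmorphXn /= h.
Qed.

Lemma sig_homog n (t i : 'I_n) a d p :
  p \is d.-homog -> comp_mpoly (sig t i a) p \is d.-homog.
Proof.
apply: comp_homog => j; rewrite tnth_mktuple.
have hX : forall k : 'I_n, ('X_k : {mpoly int[n]}) \is 1.-homog.
  move=> k; rewrite dhomogX; apply/eqP; exact: mdeg1.
case: (j == t); last exact: hX.
apply: rpredD; first exact: hX.
by rewrite mul_mpolyC; apply: dhomogZ.
Qed.

Lemma sig_inv n (t i : 'I_n) a : i != t ->
  forall p, comp_mpoly (sig t i (- a)) (comp_mpoly (sig t i a) p) = p.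
Proof.
move=> hit; apply: comp_inv => j; rewrite tnth_mktuple.
case: eqP => [->|hjt]; last by rewrite sigX (introF eqP hjt).
rewrite rmorphD rmorphM /= comp_mpolyC !sigX eqxx (negbTE hit) mpolyCN; ring.
Qed.

Definition dd n (A : 'M[int]_n) (t : 'I_n) (a : int) (c : 'I_n) : int :=
  if c == t then - (a * 2) else if (t < c)%N then A t c * a else 0.

Definition Mv n (A : 'M[int]_n) (t i : 'I_n) (a : int) : 'M[int]_n :=
  \matrix_(r, c) (A r c + (r == i)%:R * dd A t a c).

Lemma alpha_Mv n (A : 'M[int]_n) t i a j :
  alpha (Mv A t i a) j = alpha A j + (dd A t a j)%:MP * 'X_i.
Proof.
rewrite /alpha.
rewrite (eq_bigr (fun r => (A r j)%:MP * 'X_r + ((r == i)%:R * dd A t a j)%:MP * 'X_r)); last first.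
  by move=> r _; rewrite mxE mpolyCD mulrDl.
rewrite big_split /=; congr (_ + _).
rewrite (bigD1 i) //= eqxx mul1r big1 ?addr0 // => r /negbTE ->.
by rewrite mul0r mpolyC0 mul0r.
Qed.


Section Move.
Variables (n : nat) (A : 'M[int]_n) (t i : 'I_n) (a : int) (e : {mpoly int[n]}).
Hypothesis hit : (i < t)%N.
Hypothesis sA : strictly_upper A.
Hypothesis H : a%:MP * 'X_i * (a%:MP * 'X_i - alpha A t) = e * gen A i.

Let B := Mv A t i a.
Local Notation phi := (comp_mpoly (sig t i a)).

Lemma i_neq_t : i != t.
Proof. by rewrite neq_ltn hit. Qed.

Lemma dd_ne j : j != t -> dd A t a j = A t j * a.
Proof.
rewrite /dd => /negbTE ->; case: ltnP => // hjt.
by rewrite sA // mul0r.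
Qed.

Lemma dd_i : dd A t a i = 0.
Proof. by rewrite /dd (negbTE i_neq_t) ltnNge ltnW. Qed.

Lemma Att : A t t = 0.
Proof. exact: sA. Qed.

Lemma alphaB_ne j : j != t -> alpha B j = phi (alpha A j).
Proof. by move=> hj; rewrite sig_alpha alpha_Mv dd_ne. Qed.

Lemma alphaB_t : alpha B t = alpha A t - (a * 2)%:MP * 'X_i.
Proof. by rewrite alpha_Mv /dd eqxx mpolyCN mulNr. Qed.

Lemma phi_alpha_t : phi (alpha A t) = alpha A t.
Proof. by rewrite sig_alpha Att mul0r mpolyC0 mul0r addr0. Qed.

Lemma genB_i : gen B i = gen A i.
Proof. by rewrite /gen alpha_Mv dd_i mpolyC0 mul0r addr0. Qed.

Lemma phiX j : phi 'X_j = if j == t then 'X_t + a%:MP * 'X_i else 'X_j.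
Proof. exact: sigX. Qed.

Lemma half_gen j : inI B (phi (gen A j)).
Proof.
rewrite /gen rmorphB rmorphXn rmorphM /= !phiX.
case: eqP => [->|/eqP hj].
  rewrite phi_alpha_t.
  have -> : ('X_t + a%:MP * 'X_i) ^+ 2 - alpha A t * ('X_t + a%:MP * 'X_i)
     = gen B t + a%:MP * 'X_i * (a%:MP * 'X_i - alpha A t).
    rewrite /gen alphaB_t mpolyCM; ring.
  by rewrite H -genB_i; apply: inID; [exact: inIgen | apply: inIMl; exact: inIgen].
by rewrite -alphaB_ne //; exact: inIgen.
Qed.

Lemma half_pont : inI B (phi (pontrjagin A) - pontrjagin B).
Proof.
rewrite /pontrjagin rmorph_prod /=; apply: inI_prod => j _.
case: (eqVneq j t) => [->|hj].
  have -> : phi (1 + alpha A t ^+ 2) - (1 + alpha B t ^+ 2) =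
    (- 4%:R * e) * gen B i.
    rewrite genB_i -mulrA -H rmorphD rmorphXn rmorph1 /= phi_alpha_t alphaB_t mpolyCM.
    ring.
  by apply: inIMl; exact: inIgen.
rewrite rmorphD rmorphXn rmorph1 /= -alphaB_ne // subrr; exact: inI0.
Qed.

Lemma sB : strictly_upper B.
Proof.
move=> r c hcr; rewrite mxE sA //; case: eqP => [hr|]; last by rewrite mul0r addr0.
rewrite /dd; have : (c < t)%N by rewrite (leq_ltn_trans hcr) // hr.
move=> hct; have /negbTE -> : c != t by rewrite -val_eqE /= neq_ltn hct.
by rewrite ltnNge ltnW //= mulr0 addr0.
Qed.

Lemma HB : (- a)%:MP * 'X_i * ((- a)%:MP * 'X_i - alpha B t) = (- e) * gen B i.
Proof.
rewrite genB_i alphaB_t.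
have -> : (- a)%:MP * 'X_i * ((- a)%:MP * 'X_i - (alpha A t - (a * 2)%:MP * 'X_i))
   = - (a%:MP * 'X_i * (a%:MP * 'X_i - alpha A t)).
  rewrite mpolyCN mpolyCM; ring.
by rewrite H; ring.
Qed.

Lemma MvMv : Mv B t i (- a) = A.
Proof.
apply/matrixP => r c; rewrite !mxE.
have hti : (t == i) = false by rewrite eq_sym (negbTE i_neq_t).
have hBt : B t c = A t c by rewrite /B mxE hti mul0r addr0.
rewrite /dd hBt; case: (r == i); last by rewrite !mul0r !addr0.
rewrite !mul1r; case: (c == t); first ring.
case: (t < c)%N; ring.
Qed.

End Move.


Lemma move_equiv n (A : 'M[int]_n) (t i : 'I_n) (a : int) (e : {mpoly int[n]}) : (i < t)%N -> strictly_upper A ->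
  a%:MP * 'X_i * (a%:MP * 'X_i - alpha A t) = e * gen A i ->
  Equiv A (Mv A t i a) /\ strictly_upper (Mv A t i a).
Proof.
move=> hit sA H.
have sB' : strictly_upper (Mv A t i a) := sB a hit sA.
have HB' := HB hit H.
have hne := i_neq_t hit.
split => //.
exists (comp_mpoly (sig t i a)); split; last exact: half_pont hit sA H.
split.
- move=> d p; exact: sig_homog.
- apply: inI_morph => j; exact: half_gen hit sA H j.
- move=> p hp.
  have := inI_morph (half_gen hit sB' HB') hp.
  rewrite MvMv // => h; rewrite -(sig_inv a hne p); exact: h.
- move=> q; exists (comp_mpoly (sig t i (-a)) q).
  have e1 := sig_inv (- a) hne q; rewrite opprK in e1.
  have h0 : inI (Mv A t i a) (comp_mpoly (sig t i a) (comp_mpoly (sig t i (-a)) q) - q) by rewrite e1 subrr; exact: inI0.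
  exact: h0.
Qed.


Lemma coef_alphaQ n (B : 'M[int]_n) j r :
  (alphaQ B j)@_U_(r) = ((B r j)%:~R : rat).
Proof.
rewrite /alphaQ (raddf_sum (mcoeff U_(r))) (bigD1 r) //= mcoeffZ mcoeffXU eqxx mulr1.
rewrite big1 ?addr0 // => k /negbTE hk; by rewrite mcoeffZ mcoeffXU hk mulr0.
Qed.

Lemma coef_yQ n (B : 'M[int]_n) i r :
  (yQ B i)@_U_(r) = (i == r)%:R - 2%:R^-1 * ((B r i)%:~R : rat).
Proof. by rewrite /yQ mcoeffB mcoeffXU mcoeffZ coef_alphaQ. Qed.

Lemma ee_extract n (B : 'M[int]_n) j : even_exceptional B j ->
  exists (i : 'I_n) (k : int), (i < j)%N /\ k != 0 /\
    forall r, B r j = k * 2 * (r == i)%:R - k * B r i.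
Proof.
move=> [i [c [hij [hc [/dvdzP [k hk] hE]]]]].
exists i, k; split => //; split.
  by apply: contraNneq hc => hk0; rewrite hk hk0 mul0r.
move=> r; have := congr1 (mcoeff U_(r)) hE.
rewrite mcoeffZ coef_alphaQ coef_yQ hk => h.
apply: (@intr_inj rat); rewrite h.
rewrite eq_sym; case: eqP => _; rewrite ?mulr1 ?mulr0 ?mul0r;
  rewrite ?(intrD, intrM, intrB, rmorphB, rmorphM) /=; by field.
Qed.

Lemma ee_cols n (A B : 'M[int]_n) (j : 'I_n) :
  (forall r c : 'I_n, (c <= j)%N -> B r c = A r c) ->
  even_exceptional B j -> even_exceptional A j.
Proof.
move=> h [i [c [hij rest]]]; exists i, c; split => //.
have ea : forall l : 'I_n, (l <= j)%N -> alphaQ B l = alphaQ A l.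
  by move=> l hl; apply: eq_bigr => r _; rewrite h.
by rewrite /yQ -!ea // ltnW.
Qed.

Lemma alpha_col n (A : 'M[int]_n) t i k :
  (forall r, A r t = k * 2 * (r == i)%:R - k * A r i) ->
  alpha A t = (k * 2)%:MP * 'X_i - k%:MP * alpha A i.
Proof.
move=> h.
have e1 : \sum_(r < n) ((k*2*(r==i)%:R)%:MP * 'X_r) = (k*2)%:MP * 'X_i.
  rewrite (bigD1 i) //= eqxx mulr1 big1 ?addr0 // => r /negbTE ->.
  by rewrite mulr0 mpolyC0 mul0r.
rewrite -e1 /alpha mulr_sumr -sumrB; apply: eq_bigr => r _.
rewrite h mpolyCB mpolyCM; ring.
Qed.

Lemma inner n (t : 'I_n) : forall m (A : 'M[int]_n), strictly_upper A ->
  (forall r : 'I_n, (m <= r)%N -> A r t = 0) ->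
  (forall j : 'I_n, (j < t)%N -> ~ even_exceptional A j) ->
  exists B, Equiv A B /\ strictly_upper B /\
    forall j : 'I_n, (j <= t)%N -> ~ even_exceptional B j.
Proof.
elim/ltn_ind => m IH A sA hz hj.
case: (Classical_Prop.classic (even_exceptional A t)) => hee; last first.
  exists A; split; first exact: Equiv_refl.
  split => // j; rewrite leq_eqVlt => /orP [/eqP hjt|]; last exact: hj.
  by have -> : j = t by apply: val_inj.
have [i [k [hit [hk hcol]]]] := ee_extract hee.
have Hm : (i < m)%N.
  rewrite ltnNge; apply/negP => hmi; have := hz i hmi.
  rewrite hcol eqxx sA // mulr0 subr0 mulr1 => /eqP.
  by rewrite mulf_eq0 (negbTE hk).
have hal := alpha_col hcol.
have H : k%:MP * 'X_i * (k%:MP * 'X_i - alpha A t) = (- (k%:MP * k%:MP)) * gen A i.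
  by rewrite hal /gen mpolyCM; ring.
have [eAB sB'] := move_equiv hit sA H.
set B := Mv A t i k in eAB sB'.
have hzB : forall r : 'I_n, (i <= r)%N -> B r t = 0.
  move=> r hr; rewrite /B mxE hcol /dd eqxx.
  rewrite (sA r i hr) mulr0 subr0.
  by case: eqP => _ /=; rewrite ?mulr1 ?mulr0 ?addr0 ?mul0r ?add0r // mul1r subrr.
have hcolB : forall r c : 'I_n, (c < t)%N -> B r c = A r c.
  move=> r c hc; rewrite /B mxE /dd.
  have /negbTE -> : c != t by rewrite -val_eqE /= neq_ltn hc.
  by rewrite ltnNge ltnW //= mulr0 addr0.
have hjB : forall j : 'I_n, (j < t)%N -> ~ even_exceptional B j.
  move=> j hjt hB; apply: (hj j hjt); apply: (ee_cols _ hB) => r c hc.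
  by apply: hcolB; apply: leq_ltn_trans hjt.
have [C [eBC [sC hC]]] := IH i Hm B sB' hzB hjB.
by exists C; split => //; exact: Equiv_trans eAB eBC.
Qed.

Lemma outer n : forall s (A : 'M[int]_n), strictly_upper A ->
  exists B, Equiv A B /\ strictly_upper B /\
    forall j : 'I_n, (j < s)%N -> ~ even_exceptional B j.
Proof.
elim => [|s IH] A sA; first by exists A; split; [exact: Equiv_refl|].
have [B [eAB [sB' hB]]] := IH A sA.
case: (ltnP s n) => hs.
  have hz : forall r : 'I_n, (n <= r)%N -> B r (Ordinal hs) = 0.
    by move=> r hr; exfalso; move: (ltn_ord r); rewrite ltnNge hr.
  have [C [eBC [sC hC]]] := @inner n (Ordinal hs) n B sB' hz hB.
  exists C; split; first exact: Equiv_trans eAB eBC.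
  by split => // j hj; apply: hC.
exists B; split => //; split => // j hj; apply: hB.
by apply: leq_trans (ltn_ord j) hs.
Qed.

Theorem lemma4p5 (n : nat) (A : 'M[int]_n) :
  strictly_upper A ->
  exists B : 'M[int]_n,
    strictly_upper B /\
    (forall j : 'I_n, ~ even_exceptional B j) /\
    exists phi : {rmorphism {mpoly int[n]} -> {mpoly int[n]}},
      graded_iso_induced A B phi /\
      inI B (phi (pontrjagin A) - pontrjagin B).
Proof.
move=> sA; have [B [eAB [sB' hB]]] := outer n sA.
exists B; split => //; split; last exact: eAB.
by move=> j; apply: hB; exact: ltn_ord.
Qed.
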